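(* Let $G$ be a finite non-abelian group such that $G/Z(G)\cong C_2\times C_2$. Then the non-centralizer graph $\Upsilon_G$ is regular.
   Context: For a finite group $G$, $C_G(x)$ denotes the centralizer of $x\in G$ and $Z(G)$ the center. The non-centralizer graph $\Upsilon_G$ is the simple graph with vertex set $G$ in which two distinct vertices $x,y$ are adjacent if and only if $C_G(x)\neq C_G(y)$. A graph is regular if all its vertices have the same degree. *)

(* Defs.v *)
From mathcomp Require Import all_boot all_fingroup all_solvable all_algebra.
Set Implicit Arguments. Unset Strict Implicit. Unset Printing Implicit Defensive.
Import GroupScope.

Definition noncent_adj (gT : finGroupType) (G : {set gT}) (x y : gT) : bool :=
  (x != y) && ('C_G[x] != 'C_G[y]).

Definition noncent_deg (gT : finGroupType) (G : {set gT}) (x : gT) : nat :=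
  #|[set y in G | noncent_adj G x y]|.

Definition noncent_regular (gT : finGroupType) (G : {set gT}) : Prop :=
  forall x y, x \in G -> y \in G -> noncent_deg G x = noncent_deg G y.

(* Main.v *)
Require Import Defs.
From mathcomp Require Import all_boot all_fingroup all_solvable all_algebra.
From mathcomp Require Import zify.
Import GroupScope.

Lemma centE_coset (gT : finGroupType) (G : {group gT}) x y :
  x \in G -> y \in 'Z(G) :* x -> 'C_G[y] = 'C_G[x].
Proof.
move=> xG /rcosetP [z /centerP [zG cz] ->].
apply/setP => g; apply/subcent1P/subcent1P => -[gG cg]; split => //.
- have czg : commute g z by apply/commute_sym/cz.
  have -> : x = z^-1 * (z * x) by rewrite mulKg.
  apply/commute_sym; exact: (commuteM (commuteV czg) (commute_sym cg)).
- apply/commute_sym; apply: commuteM; first exact/commute_sym/cz.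
  exact/commute_sym.
Qed.

Lemma Z_cent (gT : finGroupType) (G : {group gT}) x :
  x \in G -> 'Z(G) \subset 'C_G[x].
Proof.
move=> xG; apply/subsetP => z /centerP [zG cz].
apply/subcent1P; split => //; exact/commute_sym/cz.
Qed.

Lemma cent_full (gT : finGroupType) (G : {group gT}) x :
  x \in G -> ('C_G[x] == G) = (x \in 'Z(G)).
Proof.
move=> xG; apply/eqP/centerP => [E|[_ cx]].
- split => // g gG. have : g \in 'C_G[x] by rewrite E.
  by case/subcent1P.
- apply/setP => g; apply/subcent1P/idP => [[]//|gG]; split => //.
  exact: cx.
Qed.

Lemma nat4 a b : (a * b = 4 -> a != 1 -> b != 1 -> b = 2)%N.
Proof.
move=> h /eqP h1 /eqP h2.
have : (b <= 4)%N by nia.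
have : (a <= 4)%N by nia.
move: h h1 h2; case: b => [|[|[|[|[|b]]]]] //; case: a => [|[|[|[|[|a]]]]] //; lia.
Qed.

Lemma key (gT : finGroupType) (G : {group gT}) x y :
  #|G : 'Z(G)| = 4 ->
  x \in G -> y \in G -> 'C_G[x] = 'C_G[y] -> 'Z(G) :* x = 'Z(G) :* y.
Proof.
move=> iG xG yG E.
case xZ: (x \in 'Z(G)).
  have yZ : y \in 'Z(G) by rewrite -cent_full // -E cent_full.
  by rewrite !rcoset_id.
case yZ: (y \in 'Z(G)).
  by move: xZ; rewrite -cent_full // E cent_full // yZ.
set C := 'C_G[x]%G.
have ZC : 'Z(G) \subset C by exact: Z_cent.
have CG : C \subset G by apply: subsetIl.
have := Lagrange_index CG ZC; rewrite iG => H.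
have n1 : #|C : 'Z(G)| != 1%N.
  rewrite indexg_eq1; apply/negP => sCZ.
  have : x \in C by rewrite inE xG cent1id.
  by move/(subsetP sCZ); rewrite xZ.
have n2 : #|G : C| != 1%N.
  rewrite indexg_eq1; apply/negP => sGC.
  have : 'C_G[x] == G by rewrite eqEsubset CG sGC.
  by rewrite cent_full // xZ.
have i2 : #|C : 'Z(G)| = 2%N.
  have H' : (#|G : C| * #|C : 'Z(G)|)%N = 4 by exact: H.
  exact: (nat4 _ _ H' n2 n1).
have xC : x \in C by rewrite inE xG cent1id.
have yC : y \in C by change (y \in 'C_G[x]); rewrite E inE yG cent1id.
have s2 : [set 'Z(G) :* 1; 'Z(G) :* x] \subset rcosets 'Z(G) C.
  apply/subsetP => A; rewrite !inE => /orP [] /eqP ->; apply/rcosetsP.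
  - by exists 1; rewrite ?group1.
  - by exists x.
have ne : 'Z(G) :* 1 != 'Z(G) :* x.
  apply/eqP; rewrite rcoset1 => h.
  by move: xZ; rewrite {1}h rcoset_refl.
have eq : [set 'Z(G) :* 1; 'Z(G) :* x] = rcosets 'Z(G) C.
  apply/eqP; rewrite eqEcard s2 -/(indexg C _) i2 cards2 ne.
  done.
have : 'Z(G) :* y \in rcosets 'Z(G) C by apply/rcosetsP; exists y.
rewrite -eq !inE => /orP [] /eqP h //.
by move: yZ; rewrite rcoset1 in h; rewrite -h rcoset_refl.
Qed.


Theorem theorem2p7 (gT : finGroupType) (G : {group gT}) :
  ~~ abelian G ->
  (G / 'Z(G)) \isog [set: 'Z_2 * 'Z_2] ->
  noncent_regular G.
Proof.
move=> _ iso x y xG yG.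
have iG : #|G : 'Z(G)| = 4.
  rewrite -card_quotient ?normal_norm ?center_normal // (card_isog iso).
  by rewrite cardsT card_prod card_ord.
suff deg : forall x, x \in G -> noncent_deg G x = (#|G| - #|'Z(G)|)%N.
  by rewrite !deg.
move=> {}x {}xG.
rewrite /noncent_deg (_ : [set y in G | _] = G :\: 'Z(G) :* x).
  rewrite cardsD (setIidPr _) ?card_rcoset //.
  apply/subsetP => w /rcosetP [z zZ ->]; rewrite groupM // (subsetP (center_sub G)) //.
apply/setP => w; rewrite !inE /noncent_adj.
case wG: (w \in G); rewrite ?andbF ?andbT //=.
case: (boolP (w \in 'Z(G) :* x)) => h /=.
- by rewrite (@centE_coset _ _ _ _ xG h) eqxx andbF.
- apply/andP; split.
  + by apply: contra h => /eqP <-; exact: rcoset_refl.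
  + by apply: contra h => /eqP /(@key _ _ _ _ iG xG wG) ->; exact: rcoset_refl.
Qed.
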